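(* Let $(\mathcal{X},\mathcal{B})$ be a $2$-IPPS$(4,v)$. If $B_1,B_2\in\mathcal{B}$ are distinct blocks with $|B_1\cap B_2|=2$, then there is no block $B'\in\mathcal{B}\setminus\{B_1,B_2\}$ such that $B_i\setminus(B_1\cap B_2)\subseteq B'$ for some $i\in\{1,2\}$.
   Context: A $(w,v)$ set system is a pair $(\mathcal{X},\mathcal{B})$ with $|\mathcal{X}|=v$ and $\mathcal{B}$ a family of $w$-element subsets (blocks) of $\mathcal{X}$. For a $w$-subset $T\subseteq\mathcal{X}$ let $P_t(T)=\{\mathcal{P}\subseteq\mathcal{B}: |\mathcal{P}|\le t,\ T\subseteq\bigcup_{B\in\mathcal{P}}B\}$. The set system is a $t$-IPPS$(w,v)$ if for every $w$-subset $T\subseteq\mathcal{X}$, either $P_t(T)=\emptyset$ or $\bigcap_{\mathcal{P}\in P_t(T)}\mathcal{P}\neq\emptyset$. *)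

(* Defs.v *)
From mathcomp Require Import all_boot.
Set Implicit Arguments. Unset Strict Implicit. Unset Printing Implicit Defensive.

Definition set_system (X : finType) (w v : nat) (Bs : {set {set X}}) : Prop :=
  #|X| = v /\ forall B, B \in Bs -> #|B| = w.

Definition Pt (X : finType) (Bs : {set {set X}}) (t : nat) (T : {set X})
  : {set {set {set X}}} :=
  [set P in powerset Bs | (#|P| <= t) && (T \subset \bigcup_(B in P) B)].

Definition IPPS (X : finType) (t w v : nat) (Bs : {set {set X}}) : Prop :=
  set_system w v Bs /\
  forall T : {set X}, #|T| = w ->
    Pt Bs t T = set0 \/ \bigcap_(P in Pt Bs t T) P != set0.

(* Main.v *)
Require Import Defs.
From mathcomp Require Import all_boot.

Lemma pair_in_Pt (X : finType) (Bs : {set {set X}}) (T A B : {set X}) :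
  A \in Bs -> B \in Bs -> T \subset A :|: B -> [set A; B] \in Pt Bs 2 T.
Proof.
move=> hA hB hT; rewrite /Pt inE powersetE.
apply/and3P; split.
- by apply/subsetP=> x; rewrite !inE => /orP[]/eqP->.
- by rewrite cards2; case: (A == B).
- apply: (subset_trans hT); rewrite subUset.
  by rewrite !(bigcup_sup _ (F := id)) ?inE ?eqxx ?orbT.
Qed.

Lemma tri_false (X : finType) (v : nat) (Bs : {set {set X}}) (T A B C : {set X}) :
  IPPS 2 4 v Bs -> #|T| = 4 -> A \in Bs -> B \in Bs -> C \in Bs ->
  A != B -> A != C -> B != C ->
  T \subset A :|: B -> T \subset A :|: C -> T \subset B :|: C -> False.
Proof.
move=> [_ H] hT hA hB hC nAB nAC nBC h1 h2 h3.
have p1 := @pair_in_Pt _ _ T _ _ hA hB h1.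
have p2 := @pair_in_Pt _ _ T _ _ hA hC h2.
have p3 := @pair_in_Pt _ _ T _ _ hB hC h3.
case: (H T hT) => [E | ].
  by move: p1; rewrite E inE.
case/set0Pn => x /bigcapP hx.
move: (hx _ p1) (hx _ p2) (hx _ p3); rewrite !inE.
move=> /orP[]/eqP E1 /orP[]/eqP E2 /orP[]/eqP E3; subst;
  by rewrite ?eqxx in nAB nAC nBC.
Qed.

Theorem proposition4 (X : finType) (v : nat) (Bs : {set {set X}}) :
  IPPS 2 4 v Bs ->
  forall B1 B2 : {set X}, B1 \in Bs -> B2 \in Bs -> B1 != B2 ->
  #|B1 :&: B2| = 2 ->
  ~ (exists B' : {set X},
       [/\ B' \in Bs, B' != B1, B' != B2 &
           (B1 :\: (B1 :&: B2) \subset B') \/ (B2 :\: (B1 :&: B2) \subset B')]).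
Proof.
move=> H B1 B2 h1 h2 n12 _ [B' [hB' n1 n2 [s|s]]].
- have c1 : #|B1| = 4 by case: H => [[_ ->]].
  apply: (@tri_false _ _ _ _ _ _ _ H c1 h1 h2 hB' n12).
  + by rewrite eq_sym.
  + by rewrite eq_sym.
  + exact: subsetUl.
  + exact: subsetUl.
  apply/subsetP=> x hx; rewrite inE.
  case: (boolP (x \in B2)) => //= nx.
  by apply: (subsetP s); rewrite !inE hx (negbTE nx).
- have c2 : #|B2| = 4 by case: H => [[_ ->]].
  apply: (@tri_false _ _ _ _ _ _ _ H c2 h2 h1 hB').
  + by rewrite eq_sym.
  + by rewrite eq_sym.
  + by rewrite eq_sym.
  + exact: subsetUl.
  + exact: subsetUl.
  apply/subsetP=> x hx; rewrite inE.
  case: (boolP (x \in B1)) => //= nx.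
  by apply: (subsetP s); rewrite !inE hx (negbTE nx).
Qed.
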